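(* Let $\mathcal{W}\subseteq\{x\in\mathbb{R}^d:\|x\|_2\le1\}$ be closed convex with $0\in\mathcal{W}$, let $f_t(x)=\langle \mathbf f_t,x\rangle$ for vectors $\mathbf f_1,\dots,\mathbf f_T\in\mathbb{R}^d$, set $\mathbf f_0=0$ and $\mathrm{EGV}^f_{T,2}=\sum_{t=0}^{T-1}\|\mathbf f_{t+1}-\mathbf f_t\|_2^2>0$. Run the online mirror prox updates with $L=1$ and $\eta=\sqrt{1/(2\mathrm{EGV}^f_{T,2})}$, i.e. $x_0=z_0=0$ and $$x_t=\arg\min_{x\in\mathcal{W}}\{\langle x,\mathbf f_{t-1}\rangle+\tfrac1{2\eta}\|x-z_{t-1}\|_2^2\},\quad z_t=\arg\min_{x\in\mathcal{W}}\{\langle x,\mathbf f_t\rangle+\tfrac1{2\eta}\|x-z_{t-1}\|_2^2\}.$$ Then $\sum_{t=1}^T\langle\mathbf f_t,x_t\rangle-\min_{x\in\mathcal{W}}\sum_{t=1}^T\langle\mathbf f_t,x\rangle\le\sqrt{2\,\mathrm{EGV}^f_{T,2}}$.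
   Context: $x_t$ is the decision played at round $t$, before $\mathbf f_t$ is revealed. *)

(* Defs.v *)
(* classical reals. Vectors of R^d are represented as
   functions nat -> R, with only coordinates 0..d-1 being meaningful;
   points of the decision set are required to vanish at coordinates >= d. *)
From Stdlib Require Import Reals Lra Lia.
Open Scope R_scope.

Definition vec := nat -> R.

Fixpoint sumR (n : nat) (g : nat -> R) : R :=
  match n with
  | O => 0
  | S m => sumR m g + g m
  end.

Definition dot (d : nat) (x y : vec) : R := sumR d (fun i => x i * y i).
Definition sqnorm (d : nat) (x : vec) : R := dot d x x.
Definition vsub (x y : vec) : vec := fun i => x i - y i.
Definition vzero : vec := fun _ => 0.

Definition in_Rd (d : nat) (W : vec -> Prop) : Prop :=
  forall w, W w -> forall i, (d <= i)%nat -> w i = 0.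

Definition convex_W (W : vec -> Prop) : Prop :=
  forall x y (l : R), W x -> W y -> 0 <= l <= 1 ->
    W (fun i => l * x i + (1 - l) * y i).

(* closed in R^d: limits (coordinatewise = in norm, finite dimension)
   of sequences in W belong to W *)
Definition closed_in_Rd (d : nat) (W : vec -> Prop) : Prop :=
  forall (s : nat -> vec) (x : vec),
    (forall n, W (s n)) ->
    (forall i, (i < d)%nat -> Un_cv (fun n => s n i) (x i)) ->
    (forall i, (d <= i)%nat -> x i = 0) ->
    W x.

Definition is_argmin (W : vec -> Prop) (g : vec -> R) (x : vec) : Prop :=
  W x /\ forall y, W y -> g x <= g y.

Definition EGV (d T : nat) (f : nat -> vec) : R :=
  sumR T (fun t => sqnorm d (vsub (f (S t)) (f t))).

Definition prox_obj (d : nat) (eta : R) (g z : vec) (x : vec) : R :=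
  dot d x g + / (2 * eta) * sqnorm d (vsub x z).

(* Main.v *)
Require Import Defs.
From Stdlib Require Import Reals Lra Lia.
Open Scope R_scope.

Ltac sumind d := unfold sqnorm, dot, vsub in *; induction d as [|? IH]; simpl in *; [ring|first [rewrite IH; ring | nra]].

Lemma sq_ge0 d a : 0 <= sqnorm d a.
Proof. unfold sqnorm, dot; induction d as [|n IH]; simpl; nra. Qed.

Lemma comb_sq d l u w z :
  sqnorm d (vsub (fun i => l * u i + (1 - l) * w i) z)
  = sqnorm d (vsub w z) + 2 * l * dot d (vsub u w) (vsub w z) + l * l * sqnorm d (vsub u w).
Proof. sumind d. Qed.

Lemma comb_dot d l u w g :
  dot d (fun i => l * u i + (1 - l) * w i) g = l * dot d u g + (1 - l) * dot d w g.
Proof. sumind d. Qed.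

Lemma polar d u w z :
  sqnorm d (vsub u z) = sqnorm d (vsub u w) + 2 * dot d (vsub u w) (vsub w z) + sqnorm d (vsub w z).
Proof. sumind d. Qed.

Lemma dsub d w u g : dot d (vsub w u) g = dot d w g - dot d u g.
Proof. sumind d. Qed.

Lemma dcomm d a b : dot d a b = dot d b a.
Proof. sumind d. Qed.

Lemma sqsym d a b : sqnorm d (vsub a b) = sqnorm d (vsub b a).
Proof. sumind d. Qed.

Lemma young d c a b : 0 < c -> dot d a b <= c * sqnorm d a + / (4 * c) * sqnorm d b.
Proof.
  intro Hc. unfold sqnorm, dot. induction d as [|n IH]; simpl. lra.
  assert (a n * b n <= c * (a n * a n) + / (4 * c) * (b n * b n)).
  { assert (H4 : 0 < / (4 * c)) by (apply Rinv_0_lt_compat; lra).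
    assert (E : c * (a n * a n) + / (4 * c) * (b n * b n) - a n * b n
       = / (4*c) * ((2*c*a n - b n) * (2*c*a n - b n))) by (field; lra).
    assert (0 <= / (4*c) * ((2*c*a n - b n) * (2*c*a n - b n))) by
      (apply Rmult_le_pos; [lra | apply Rle_0_sqr]).
    lra. }
  lra.
Qed.

Lemma opt d (W : vec -> Prop) eta g z w u :
  0 < eta -> convex_W W -> is_argmin W (prox_obj d eta g z) w -> W u ->
  dot d (vsub w u) g <= / (2 * eta) *
     (sqnorm d (vsub u z) - sqnorm d (vsub u w) - sqnorm d (vsub w z)).
Proof.
  intros He Hc [Hw Hmin] Hu.
  set (c := / (2 * eta)).
  assert (Hc0 : 0 < c) by (unfold c; apply Rinv_0_lt_compat; lra).
  set (A := dot d u g - dot d w g + 2 * c * dot d (vsub u w) (vsub w z)).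
  set (B := sqnorm d (vsub u w)).
  assert (HB : 0 <= B) by apply sq_ge0.
  assert (Hl : forall l, 0 < l <= 1 -> 0 <= l * A + c * (l * l) * B).
  { intros l Hl. specialize (Hmin _ (Hc u w l Hu Hw ltac:(lra))).
    unfold prox_obj in Hmin. fold c in Hmin.
    rewrite comb_sq, comb_dot in Hmin. unfold A, B. nra. }
  assert (HA : 0 <= A).
  { destruct (Rle_lt_dec 0 A) as [|HA]; auto.
    set (l := - A / (- A + c * B + 1)).
    assert (Hden : 0 < - A + c * B + 1) by nra.
    assert (Hl0 : 0 < l) by (unfold l; apply Rdiv_lt_0_compat; lra).
    assert (Hl1 : l <= 1).
    { unfold l. apply (Rmult_le_reg_r (- A + c * B + 1)); auto.
      field_simplify; nra. }
    specialize (Hl l (conj Hl0 Hl1)).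
    assert (0 <= A + c * l * B) by nra.
    assert (E : l * (- A + c * B + 1) = - A) by (unfold l; field; lra).
    nra. }
  rewrite dsub, (polar d u w z). unfold A, B in *. lra.
Qed.

Lemma diff_id d ft fp xt zt u :
  dot d ft xt - dot d ft u =
  dot d (vsub zt u) ft + dot d (vsub xt zt) fp + dot d (vsub xt zt) (vsub ft fp).
Proof. sumind d. Qed.

Theorem mainTheorem5 (d T : nat) (W : vec -> Prop) (f : nat -> vec)
  (x z : nat -> vec) :
  in_Rd d W ->
  (forall w, W w -> sqnorm d w <= 1) ->
  closed_in_Rd d W ->
  convex_W W ->
  W vzero ->
  (forall i, f O i = 0) ->
  0 < EGV d T f ->
  x O = vzero -> z O = vzero ->
  (forall t, (1 <= t <= T)%nat ->
     is_argmin W (prox_obj d (sqrt (1 / (2 * EGV d T f))) (f (t - 1)%nat) (z (t - 1)%nat)) (x t) /\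
     is_argmin W (prox_obj d (sqrt (1 / (2 * EGV d T f))) (f t) (z (t - 1)%nat)) (z t)) ->
  forall u, W u ->
    sumR T (fun t => dot d (f (S t)) (x (S t))) - sumR T (fun t => dot d (f (S t)) u)
      <= sqrt (2 * EGV d T f).
Proof.
  intros _ Hball _ Hconv _ _ HE _ Hz0 Hstep u Hu.
  set (E := EGV d T f) in *.
  set (s := sqrt (2 * E)).
  assert (Hs : 0 < s) by (apply sqrt_lt_R0; lra).
  assert (Hss : s * s = 2 * E) by (apply sqrt_sqrt; lra).
  set (eta := sqrt (1 / (2 * E))) in *.
  assert (Heta : eta = / s).
  { unfold eta, s. rewrite <- sqrt_inv. f_equal. field. lra. }
  assert (He0 : 0 < eta) by (rewrite Heta; apply Rinv_0_lt_compat; lra).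
  set (c := / (2 * eta)).
  assert (Hc : c = s / 2) by (unfold c; rewrite Heta; field; lra).
  assert (H4c : / (4 * c) = eta / 2) by (rewrite Hc, Heta; field; lra).
  set (D := fun t => sqnorm d (vsub u (z t))).
  assert (Hround : forall n, (n < T)%nat ->
     dot d (f (S n)) (x (S n)) - dot d (f (S n)) u <=
     c * (D n - D (S n)) + eta / 2 * sqnorm d (vsub (f (S n)) (f n))).
  { intros n Hn. destruct (Hstep (S n) ltac:(lia)) as [Hx Hzz].
    replace (S n - 1)%nat with n in Hx, Hzz by lia.
    pose proof (opt d W eta (f (S n)) (z n) (z (S n)) u He0 Hconv Hzz Hu) as H1.
    pose proof (opt d W eta (f n) (z n) (x (S n)) (z (S n)) He0 Hconv Hx (proj1 Hzz)) as H2.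
    pose proof (young d c (vsub (x (S n)) (z (S n))) (vsub (f (S n)) (f n))
                 ltac:(rewrite Hc; lra)) as H3.
    rewrite H4c in H3. fold c in H1, H2.
    rewrite (diff_id d (f (S n)) (f n) (x (S n)) (z (S n)) u).
    pose proof (sq_ge0 d (vsub (x (S n)) (z n))).
    rewrite (sqsym d (z (S n)) (x (S n))) in H2.
    unfold D. 
    assert (0 <= c * sqnorm d (vsub (x (S n)) (z n))) by (apply Rmult_le_pos; lra).
    nra. }
  assert (Hsum : forall n, (n <= T)%nat ->
     sumR n (fun t => dot d (f (S t)) (x (S t))) - sumR n (fun t => dot d (f (S t)) u)
     <= c * (D O - D n) + eta / 2 * sumR n (fun t => sqnorm d (vsub (f (S t)) (f t)))).
  { induction n as [|n IH]; intros Hn; simpl.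
    - replace (D O - D O) with 0 by ring. lra.
    - specialize (IH ltac:(lia)). specialize (Hround n ltac:(lia)). nra. }
  specialize (Hsum T (le_n T)). fold (EGV d T f) in Hsum. fold E in Hsum.
  assert (HD0 : D O <= 1).
  { unfold D. rewrite Hz0. replace (vsub u vzero) with u.
    apply Hball; auto. unfold vsub, vzero. apply FunctionalExtensionality.functional_extensionality; intro; ring. }
  assert (HDT : 0 <= D T) by apply sq_ge0.
  assert (Hfin : c * (D O - D T) + eta / 2 * E <= s).
  { assert (0 <= c) by (rewrite Hc; lra).
    assert (c * (D O - D T) <= c) by nra.
    assert (eta / 2 * E = s / 4).
    { rewrite Heta. apply (Rmult_eq_reg_r s); [| lra]. field_simplify; [|lra]. nra. }
    rewrite Hc in *. lra. }
  lra.
Qed.
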